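(* For $n=3$: $\mathbb{O}_{3,0}\simeq\mathbb{O}_{2,1}\simeq\mathbb{O}_{1,2}$, and $\mathbb{O}_{0,3}$ is not isomorphic to any of them by an isomorphism preserving the structure of $\mathbb{Z}_2^3$-graded algebra.
   Context: $\mathbb{Z}_2=\{0,1\}$. For $p+q=n\ge3$, $\mathbb{O}_{p,q}$ is the real algebra with basis $\{u_x: x\in\mathbb{Z}_2^n\}$ and product $u_x\cdot u_y=(-1)^{f(x,y)}u_{x+y}$, where $f(x,y)=\sum_{1\le i<j<k\le n}(x_ix_jy_k+x_iy_jx_k+y_ix_jx_k)+\sum_{1\le i\le j\le n}x_iy_j+\sum_{1\le i\le p}x_iy_i$. Homogeneous elements are scalar multiples of some $u_x$; an isomorphism preserving the graded structure is an algebra isomorphism sending homogeneous elements to homogeneous elements. *)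

(* Defs.v *)
From HB Require Import structures.
From mathcomp Require Import all_boot all_order all_algebra.
From mathcomp Require Import reals.
Set Implicit Arguments. Unset Strict Implicit. Unset Printing Implicit Defensive.
Import Order.TTheory GRing.Theory Num.Theory.
Local Open Scope ring_scope.

(* Z_2^n, coordinates indexed 0..n-1 (paper: 1..n) *)
Notation Z2n n := {ffun 'I_n -> bool}.

Definition zadd n (x y : Z2n n) : Z2n n := [ffun i => x i (+) y i].

(* The cocycle f(x,y) of the paper, as a natural number (only its parity
   matters). Index shift: paper's 1 <= i <= p becomes (i : 'I_n) < p. *)
Definition fcoc (p n : nat) (x y : Z2n n) : nat :=
  (\sum_(i : 'I_n) \sum_(j : 'I_n) \sum_(k : 'I_n | (i < j) && (j < k))
      (x i * x j * y k + x i * y j * x k + y i * x j * x k)%N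
   + \sum_(i : 'I_n) \sum_(j : 'I_n | i <= j) (x i * y j)%N
   + \sum_(i : 'I_n | (i < p)%N) (x i * y i)%N)%N.

(* Elements of O_{p,q}: real coordinate vectors on the basis {u_x}. *)
Notation vec R n := {ffun Z2n n -> R%type}.

Definition vscale (R : realType) n (c : R) (a : vec R n) : vec R n :=
  [ffun z => c * a z].

Definition ub (R : realType) n (x : Z2n n) : vec R n :=
  [ffun z => if z == x then 1 else 0].

(* product of O_{p,q} extended bilinearly from u_x u_y = (-1)^f(x,y) u_{x+y} *)
Definition Omul (R : realType) (p q : nat) (a b : vec R (p + q)) : vec R (p + q) :=
  [ffun z => \sum_(x : Z2n (p + q)) \sum_(y : Z2n (p + q) | zadd x y == z)
      (-1) ^+ (fcoc p x y) * a x * b y].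

Definition homogeneous (R : realType) n (a : vec R n) : Prop :=
  exists (x : Z2n n) (c : R), a = vscale c (ub R x).

Definition graded_isomorphic (R : realType) (p q p' q' : nat) : Prop :=
  exists phi : vec R (p + q) -> vec R (p' + q'),
    [/\ (forall (c : R) (a b : vec R (p + q)), phi (vscale c a + b) = vscale c (phi a) + phi b),
        bijective phi,
        (forall a b, phi (Omul a b) = Omul (phi a) (phi b)) &
        (forall a, homogeneous a -> homogeneous (phi a))].

(* Main.v *)
Require Import Defs.
From HB Require Import structures.
From mathcomp Require Import all_boot all_order all_algebra.
From mathcomp Require Import reals.
From mathcomp Require Import ring lra zify.
Set Implicit Arguments. Unset Strict Implicit. Unset Printing Implicit Defensive.
Import Order.TTheory GRing.Theory Num.Theory.
Local Open Scope ring_scope.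

Lemma zaddK n (x y : Z2n n) : zadd x (zadd x y) = y.
Proof. by apply/ffunP => i; rewrite /zadd !ffunE addKb. Qed.

Lemma zadd_eq n (x y z : Z2n n) : (zadd x y == z) = (y == zadd x z).
Proof.
apply/eqP/eqP => [<-|->]; [by rewrite zaddK|by rewrite zaddK].
Qed.

Lemma omulE (R : realType) p q (a b : vec R (p + q)) z :
  Omul a b z = \sum_x (-1) ^+ fcoc p x (zadd x z) * a x * b (zadd x z).
Proof.
rewrite ffunE; apply: eq_bigr => x _.
by rewrite (big_pred1 (zadd x z)) // => y /=; rewrite zadd_eq.
Qed.

Lemma ubE (R : realType) n (x z : Z2n n) : ub R x z = if z == x then 1 else 0.
Proof. by rewrite ffunE. Qed.

Lemma omul_ub (R : realType) p q (x y : Z2n (p + q)) :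
  Omul (ub R x) (ub R y) = vscale ((-1) ^+ fcoc p x y) (ub R (zadd x y)).
Proof.
apply/ffunP => z; rewrite omulE (bigD1 x) //= big1 => [|x' /negPf nx]; last first.
  by rewrite ubE nx mulr0 mul0r.
rewrite !ffunE eqxx mulr1 addr0 -zadd_eq eq_sym.
case: eqP => [<-|_]; last by rewrite !mulr0.
by [].
Qed.

Lemma omul_scale (R : realType) p q (c d : R) (a b : vec R (p + q)) :
  Omul (vscale c a) (vscale d b) = vscale (c * d) (Omul a b).
Proof.
apply/ffunP => z; rewrite !omulE ffunE omulE mulr_sumr; apply: eq_bigr => x _.
rewrite !ffunE; ring.
Qed.

Lemma aux (R : comNzRingType) (A B C D E u v : R) :
  A * B * C = D * E -> D * (E * u * v) = A * (B * u) * (C * v).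
Proof.
move=> H; have -> : D * (E * u * v) = (D * E) * (u * v) by ring.
rewrite -H; ring.
Qed.

Lemma iso (R : realType) p q p' q' (tau : Z2n (p' + q') -> Z2n (p + q))
  (sig : Z2n (p + q) -> Z2n (p' + q')) (e : Z2n (p' + q') -> bool) :
  cancel tau sig -> cancel sig tau ->
  (forall x z, tau (zadd x z) = zadd (tau x) (tau z)) ->
  (forall x z, odd (fcoc p' x (zadd x z)) (+) e x (+) e (zadd x z)
               = e z (+) odd (fcoc p (tau x) (zadd (tau x) (tau z)))) ->
  graded_isomorphic R p q p' q'.
Proof.
move=> ts st Hadd Hs.
pose phi (a : vec R (p + q)) : vec R (p' + q') := [ffun z => (-1) ^+ e z * a (tau z)].
pose psi (b : vec R (p' + q')) : vec R (p + q) := [ffun x => (-1) ^+ e (sig x) * b (sig x)].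
exists phi; split.
- by move=> c a b; apply/ffunP => z; rewrite !ffunE; ring.
- exists psi => [a|b]; apply/ffunP => z; rewrite !ffunE.
    by rewrite st signrMK.
  by rewrite ts signrMK.
- move=> a b; apply/ffunP => z; rewrite ffunE !omulE mulr_sumr.
  rewrite (reindex tau) /=; last by exists sig => y _; [apply: ts|apply: st].
  apply: eq_bigr => x _.
  rewrite !ffunE Hadd -!(@signr_odd R (fcoc _ _ _)).
  have H := congr1 (fun b : bool => (-1) ^+ b : R) (Hs x z).
  rewrite /= !signr_addb in H.
  exact: aux H.
- move=> a [x [c ->]]; exists (sig x), (c * (-1) ^+ e (sig x)).
  apply/ffunP => z; rewrite !ffunE (can2_eq ts st).
  case: eqP => [->|_]; ring.
Qed.

Definition z0 n : Z2n n := [ffun _ => false].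

Lemma zaddxx n (x : Z2n n) : zadd x x = z0 n.
Proof. by apply/ffunP => i; rewrite !ffunE addbb. Qed.

Lemma vscale1 (R : realType) n (a : vec R n) : vscale 1 a = a.
Proof. by apply/ffunP => z; rewrite ffunE mul1r. Qed.

Lemma sq_ub (R : realType) p q (x : Z2n (p + q)) (b : bool) :
  odd (fcoc p x x) = b -> Omul (ub R x) (ub R x) = vscale ((-1) ^+ b) (ub R (z0 _)).
Proof. by move=> H; rewrite omul_ub -signr_odd H zaddxx. Qed.

Lemma noniso (R : realType) p q p' q' (e0 : Z2n (p' + q')) :
  (forall x : Z2n (p + q), x != z0 _ -> odd (fcoc p x x)) ->
  odd (fcoc p (z0 (p + q)) (z0 (p + q))) = false ->
  odd (fcoc p' e0 e0) = false -> e0 != z0 _ ->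
  odd (fcoc p' (z0 (p' + q')) (z0 (p' + q'))) = false ->
  ~ graded_isomorphic R p q p' q'.
Proof.
move=> Hodd H0 He0 ne0 H0' [phi [lin [g gK Kg] mul hom]].
have add a b : phi (a + b) = phi a + phi b by have := lin 1 a b; rewrite !vscale1.
have phi0 : phi 0 = 0 by apply/(addrI (phi 0)); rewrite addr0 -add addr0.
have sc c a : phi (vscale c a) = vscale c (phi a) by rewrite -[vscale c a]addr0 lin phi0 addr0.
have dec (a : vec R (p + q)) : a = \sum_x vscale (a x) (ub R x).
  apply/ffunP => z; rewrite sum_ffunE (bigD1 z) //= big1 => [|x /negPf nx].
    by rewrite !ffunE eqxx mulr1 addr0.
  by rewrite !ffunE eq_sym nx mulr0.
have phisum a : phi a = \sum_x vscale (a x) (phi (ub R x)).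
  by rewrite {1}(dec a) (big_morph phi add phi0); apply: eq_bigr => x _; rewrite sc.
have [x nz] : exists x, phi (ub R x) e0 != 0.
  apply/existsP; apply: contraT; rewrite negb_exists => /forallP Hall.
  have : ub R e0 e0 = 0.
    rewrite -{1}(Kg (ub R e0)) phisum sum_ffunE big1 // => x _.
    by rewrite ffunE (eqP (negbNE (Hall x))) mulr0.
  by rewrite ffunE eqxx => /eqP; rewrite oner_eq0.
have [y [c Hxy]] : homogeneous (phi (ub R x)).
  by apply: hom; exists x, 1; rewrite vscale1.
have ye : y = e0.
  by move: nz; rewrite Hxy !ffunE; case: (eqVneq e0 y) => [->//|_]; rewrite mulr0 eqxx.
subst y.
have cnz : c != 0 by move: nz; rewrite Hxy !ffunE eqxx mulr1.
have Himg : Omul (phi (ub R x)) (phi (ub R x)) = vscale (c * c) (ub R (z0 _)).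
  by rewrite Hxy omul_scale (sq_ub R He0) expr0 vscale1.
set P := phi (ub R (z0 _)).
have HP : Omul P P = P by rewrite /P -mul (sq_ub R H0) expr0 vscale1.
have [xz|xnz] := eqVneq x (z0 _).
  subst x; move: Himg; rewrite -/P HP /P Hxy => /ffunP /(_ e0).
  rewrite !ffunE eqxx (negbTE ne0) mulr0 mulr1 => /eqP; by rewrite (negbTE cnz).
move: Himg; rewrite -mul (sq_ub R (Hodd x xnz)) expr1 sc -/P => HP2.
have HP3 : P = vscale (- (c * c)) (ub R (z0 _)).
  apply/ffunP => z; move/ffunP: HP2 => /(_ z); rewrite !ffunE => H.
  have -> : P z = - (-1 * P z) by ring.
  rewrite H; ring.
move: HP; rewrite {1 2}HP3 omul_scale (sq_ub R H0') expr0 vscale1 HP3.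
move=> /ffunP /(_ (z0 _)); rewrite !ffunE eqxx !mulr1 => H.
have : 0 < c * c by rewrite lt0r mulf_neq0 //= -expr2 sqr_ge0.
nra.
Qed.

Local Close Scope ring_scope.
Notation o0 := (@Ordinal 3 0 isT).
Notation o1 := (@Ordinal 3 1 isT).
Notation o2 := (@Ordinal 3 2 isT).

Definition fcb (p : nat) (a0 a1 a2 b0 b1 b2 : bool) : bool :=
  [&& a0, a1 & b2] (+) [&& a0, b1 & a2] (+) [&& b0, a1 & a2] (+)
  (a0 && b0) (+) (a0 && b1) (+) (a0 && b2) (+) (a1 && b1) (+) (a1 && b2) (+) (a2 && b2)
  (+) [&& (0 < p)%N, a0 & b0] (+) [&& (1 < p)%N, a1 & b1] (+) [&& (2 < p)%N, a2 & b2].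

Lemma fcoc3 p (x y : Z2n 3) : odd (fcoc p x y) = fcb p (x o0) (x o1) (x o2) (y o0) (y o1) (y o2).
Proof.
rewrite /fcoc !big_mkcond /= !big_ord_recl !big_ord0 /=.
rewrite ?(big_mkcond (fun k : 'I_3 => _ < k)) ?(big_mkcond (fun k : 'I_3 => _ <= k)) ?(big_mkcond (fun k : 'I_3 => false)) /=.
rewrite !big_ord_recl !big_ord0 /=.
rewrite (big_mkcond (fun i : 'I_3 => i < p)) !big_ord_recl big_ord0 /=.
have E0 : ord0 = o0 by apply: val_inj.
have E1 : lift ord0 ord0 = o1 :> 'I_3 by apply: val_inj.
have E2 : lift ord0 (lift ord0 ord0) = o2 :> 'I_3 by apply: val_inj.
rewrite E2 E1 E0 /fcb.
move: (0 < p)%N (1 < p)%N (2 < p)%N (x o0) (x o1) (x o2) (y o0) (y o1) (y o2).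
by do 9 case.
Qed.

Lemma ffun3 (f g : Z2n 3) : f o0 = g o0 -> f o1 = g o1 -> f o2 = g o2 -> f = g.
Proof.
move=> h0 h1 h2; apply/ffunP => -[[|[|[|i]]] Hi] //.
- by rewrite (_ : Ordinal Hi = o0) //; apply: val_inj.
- by rewrite (_ : Ordinal Hi = o1) //; apply: val_inj.
- by rewrite (_ : Ordinal Hi = o2) //; apply: val_inj.
Qed.

Definition tau1 (z : Z2n (2 + 1)) : Z2n (3 + 0) :=
  [ffun i : 'I_3 => match nat_of_ord i with 0 => z o2 | 1 => z o1 | _ => z o0 (+) z o2 end].
Definition sig1 (t : Z2n (3 + 0)) : Z2n (2 + 1) :=
  [ffun i : 'I_3 => match nat_of_ord i with 0 => t o2 (+) t o0 | 1 => t o1 | _ => t o0 end].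
Definition e1 (z : Z2n (2 + 1)) : bool := z o0 && (z o1 (+) z o2).

Lemma iso1 (R : realType) : graded_isomorphic R 3 0 2 1.
Proof.
apply: (@iso R 3 0 2 1 tau1 sig1 e1).
- by move=> z; apply: ffun3; rewrite !ffunE /=; case: (z o0); case: (z o2).
- by move=> z; apply: ffun3; rewrite !ffunE /=; case: (z o0); case: (z o2).
- move=> x z; apply: ffun3; rewrite /zadd !ffunE /=;
  by case: (x o0); case: (x o1); case: (x o2); case: (z o0); case: (z o1); case: (z o2).
- move=> x z; rewrite !fcoc3 /e1 /zadd /tau1 !ffunE /=.
  by move: (x o0) (x o1) (x o2) (z o0) (z o1) (z o2); do 6 case.
Qed.

Definition tau2 (z : Z2n (1 + 2)) : Z2n (2 + 1) :=
  [ffun i : 'I_3 => match nat_of_ord i with 0 => z o2 | 1 => z o0 (+) z o2 | _ => z o1 end].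
Definition sig2 (t : Z2n (2 + 1)) : Z2n (1 + 2) :=
  [ffun i : 'I_3 => match nat_of_ord i with 0 => t o1 (+) t o0 | 1 => t o2 | _ => t o0 end].
Definition e2 (z : Z2n (1 + 2)) : bool := z o2 && (z o0 (+) z o1).

Lemma iso2 (R : realType) : graded_isomorphic R 2 1 1 2.
Proof.
apply: (@iso R 2 1 1 2 tau2 sig2 e2).
- by move=> z; apply: ffun3; rewrite !ffunE /=; case: (z o0); case: (z o2).
- by move=> z; apply: ffun3; rewrite !ffunE /=; case: (z o0); case: (z o1).
- move=> x z; apply: ffun3; rewrite /zadd !ffunE /=;
  by case: (x o0); case: (x o1); case: (x o2); case: (z o0); case: (z o1); case: (z o2).
- move=> x z; rewrite !fcoc3 /e2 /zadd /tau2 !ffunE /=.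
  by move: (x o0) (x o1) (x o2) (z o0) (z o1) (z o2); do 6 case.
Qed.

Definition e0v n : Z2n n := [ffun i : 'I_n => nat_of_ord i == 0%N].

Lemma odd03 (x : Z2n (0 + 3)) : x != z0 _ -> odd (fcoc 0 x x).
Proof.
rewrite fcoc3; case E0: (x o0); case E1: (x o1); case E2: (x o2) => //=.
rewrite (_ : x = z0 _) ?eqxx //; apply: ffun3; by rewrite ffunE.
Qed.

Lemma noniso3 (R : realType) p' q' : (p' + q' = 3)%N -> (0 < p')%N ->
  ~ graded_isomorphic R 0 3 p' q'.
Proof.
move=> Hn Hp; move: q' Hn; case: p' Hp => [|[|[|[|p']]]] // _ q' Hn.
- have -> : q' = 2%N by lia.
  apply: (@noniso R 0 3 1 2 (e0v _)) => //; try (by apply: odd03);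
  try (by rewrite fcoc3 !ffunE).
  by apply/eqP => /ffunP /(_ o0); rewrite !ffunE.
- have -> : q' = 1%N by lia.
  apply: (@noniso R 0 3 2 1 (e0v _)) => //; try (by apply: odd03);
  try (by rewrite fcoc3 !ffunE).
  by apply/eqP => /ffunP /(_ o0); rewrite !ffunE.
- have -> : q' = 0%N by lia.
  apply: (@noniso R 0 3 3 0 (e0v _)) => //; try (by apply: odd03);
  try (by rewrite fcoc3 !ffunE).
  by apply/eqP => /ffunP /(_ o0); rewrite !ffunE.
Qed.

Theorem mainTheorem4 (R : realType) :
  [/\ graded_isomorphic R 3 0 2 1,
      graded_isomorphic R 2 1 1 2,
      ~ graded_isomorphic R 0 3 3 0,
      ~ graded_isomorphic R 0 3 2 1 &
      ~ graded_isomorphic R 0 3 1 2].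
Proof.
split; [exact: iso1 | exact: iso2 | exact: noniso3 | exact: noniso3 | exact: noniso3].
Qed.
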